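(* Let $(\Omega,\mathcal{F})$ be a measurable space and $\mathcal{P}=\{P_1,\dots,P_K\}$ a finite set of probability measures on it, with $\hat{\mathbb{E}}[Z]=\max_{1\le i\le K}E_{P_i}[Z]$. Let $X,Y$ be random variables with $\hat{\mathbb{E}}[X^2]+\hat{\mathbb{E}}[Y^2]<\infty$. Let $\boldsymbol{\mu}=(E_{P_1}[X],\dots,E_{P_K}[X])^T$, $\boldsymbol{\nu}=(E_{P_1}[Y],\dots,E_{P_K}[Y])^T$ and $\boldsymbol{\kappa}=(E_{P_1}[XY],\dots,E_{P_K}[XY])^T$ in $\mathbb{R}^K$. Then $$\overline{C}(X,Y)=\max_{\boldsymbol{\lambda}\in\Delta^K}\left(\boldsymbol{\lambda}^T\boldsymbol{\kappa}-\boldsymbol{\lambda}^T\boldsymbol{\mu}\boldsymbol{\nu}^T\boldsymbol{\lambda}\right),$$ where $\Delta^K=\{\boldsymbol{\lambda}=(\lambda_1,\dots,\lambda_K)\in\mathbb{R}^K:\sum_{i=1}^K\lambda_i=1,\ \lambda_i\ge0\}$.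
   Context: For a random variable $W$ with $\hat{\mathbb{E}}[W^2]<\infty$: $\overline{\mu}_W=\hat{\mathbb{E}}[W]$, $\underline{\mu}_W=-\hat{\mathbb{E}}[-W]$, $M_W=[\underline{\mu}_W,\overline{\mu}_W]$. Upper covariance $\overline{C}(X,Y)=\max_{\mu_2\in M_Y}\min_{\mu_1\in M_X}\hat{\mathbb{E}}[(X-\mu_1)(Y-\mu_2)]$. *)

(* Defs.v *)
From HB Require Import structures.
From mathcomp Require Import all_boot all_order all_algebra.
From mathcomp Require Import all_classical all_reals all_analysis.
Set Implicit Arguments. Unset Strict Implicit. Unset Printing Implicit Defensive.
Import Order.TTheory GRing.Theory Num.Theory.
Local Open Scope classical_set_scope.
Local Open Scope ring_scope.

Section Defs.
Context {R : realType} {d : measure_display} {T : measurableType d} {K : nat}.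
Variable P : 'I_K -> probability T R.

(* Linear expectation E_{P_i}[Z] (real-valued; meaningful for integrable Z). *)
Definition Ei (i : 'I_K) (Z : T -> R) : R := fine (\int[P i]_x (Z x)%:E)%E.

Definition Ehat (Z : T -> R) : R := sup [set Ei i Z | i in [set: 'I_K]].

Definition mu_up (W : T -> R) : R := Ehat W.
Definition mu_lo (W : T -> R) : R := - Ehat (fun x => - W x).

Definition upper_cov (X Y : T -> R) : R :=
  sup [set inf [set Ehat (fun x => (X x - m1) * (Y x - m2))
                | m1 in `[mu_lo X, mu_up X]]
       | m2 in `[mu_lo Y, mu_up Y]].

Definition Evec (Z : T -> R) : 'cV[R]_K := \col_i Ei i Z.
End Defs.

Definition simplex {R : realType} (K : nat) : set 'cV[R]_K :=
  [set l | (forall i, 0 <= l i 0) /\ \sum_i l i 0 = 1].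
Arguments simplex {R} K _.

(* Main.v *)
Require Import Defs.
From HB Require Import structures.
From mathcomp Require Import all_boot all_order all_algebra.
From mathcomp Require Import all_classical all_reals all_analysis.
From mathcomp Require Import ring lra.
Import Order.TTheory GRing.Theory Num.Theory.
Import numFieldNormedType.Exports.
Local Open Scope classical_set_scope.
Local Open Scope ring_scope.

Section Alg.
Context (R : realType) (K : nat) (a b c : 'I_K -> R).

Definition q i j (t : R) :=
  (t * c i + (1 - t) * c j) - (t * a i + (1 - t) * a j) * (t * b i + (1 - t) * b j).

Lemma helly (al be m2 V : R) (i0 : 'I_K) :
  (forall i, al <= a i <= be) ->
  (forall i j s, 0 <= s <= 1 -> q i j s <= V) ->
  exists m1, al <= m1 <= be /\
    forall i, c i - m2 * a i - m1 * b i + m1 * m2 <= V.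
Proof.
move=> hab hV.
pose s i := m2 - b i. pose e i := c i - m2 * a i.
pose m1 := \big[Num.max/al]_(i | s i < 0) ((V - e i) / s i).
have hal : al <= be by case/andP: (hab i0) => h1 h2; exact: le_trans h1 h2.
have vert : forall i, c i - a i * b i <= V.
  move=> i; have ee : q i i 1 = c i - a i * b i by rewrite /q; ring.
  by rewrite -ee; apply: hV; rewrite ler01 lexx.
have Hm1a : al <= m1 by exact: bigmax_ge_id.
have Hm1n : forall i, s i < 0 -> (V - e i) / s i <= m1.
  by move=> i hi; rewrite /m1; apply: le_bigmax_cond.
have Hm1p : forall j, 0 < s j -> m1 <= (V - e j) / s j.
  move=> j hj; apply: bigmax_le.
    rewrite ler_pdivlMr //.
    have := vert j; case/andP: (hab j) => h1 h2.
    rewrite /s /e in hj *. nra.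
  move=> i hi; rewrite ler_ndivrMr // mulrAC ler_pdivrMr //.
  set D := s j - s i.
  have hD : 0 < D by rewrite /D; lra.
  pose t := s j / D.
  have ht0 : 0 <= t by rewrite /t divr_ge0 // ltW.
  have ht1 : t <= 1 by rewrite /t ler_pdivrMr // mul1r /D; lra.
  have := hV i j t (ltac:(by rewrite ht0 ht1)).
  have hb : t * b i + (1 - t) * b j = m2.
    rewrite /t /D /s in hD *; field; lra.
  rewrite /q hb.
  have -> : t * c i + (1 - t) * c j - (t * a i + (1 - t) * a j) * m2 =
            t * e i + (1 - t) * e j by rewrite /e; ring.
  have e1 : 1 - t = - s i / D by rewrite /t /D; field; lra.
  rewrite e1 /t => h.
  have : s j * e i - s i * e j <= V * D.
    have : (s j / D * e i + - s i / D * e j) * D <= V * D by rewrite ler_pM2r.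
    have -> : (s j / D * e i + - s i / D * e j) * D = s j * e i - s i * e j
      by field; lra.
    by [].
  rewrite /D. nra.
have Hm1b : m1 <= be.
  apply: bigmax_le => // i hi; rewrite ler_ndivrMr //.
  have := vert i; case/andP: (hab i) => h1 h2.
  rewrite /s /e in hi *. nra.
exists m1; split; first by rewrite Hm1a Hm1b.
move=> i.
have -> : c i - m2 * a i - m1 * b i + m1 * m2 = e i + m1 * s i by rewrite /e /s; ring.
case: (ltrgtP (s i) 0) => hs.
- have := Hm1n i hs; rewrite ler_ndivrMr // => h. lra.
- have := Hm1p i hs; rewrite ler_pdivlMr // => h. nra.
- rewrite hs mulr0 addr0 /e.
  have : b i = m2 by move: hs; rewrite /s; lra.
  move=> <-; have := vert i; lra.
Qed.

Lemma q_max i j : exists2 t, 0 <= t <= 1 &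
  forall s, 0 <= s <= 1 -> q i j s <= q i j t.
Proof.
pose p : {poly R} := (- ((a i - a j) * (b i - b j)))%:P * 'X^2
  + (c i - c j - a j * (b i - b j) - b j * (a i - a j))%:P * 'X
  + (c j - a j * b j)%:P.
have hq : forall t, q i j t = p.[t].
  by move=> t; rewrite /p !hornerD !hornerCM hornerXn hornerX hornerC /q; ring.
have [t ht hmax] : exists2 t, t \in `[(0:R), 1] &
    forall s, s \in `[(0:R), 1] -> p.[s] <= p.[t].
  apply: EVT_max => //; by apply/continuous_subspaceT => ?; exact: continuous_horner.
exists t; first by move: ht; rewrite in_itv.
move=> s hs; rewrite !hq; apply: hmax; by rewrite in_itv.
Qed.

Lemma best_pair (i0 : 'I_K) : exists i j t, 0 <= t <= 1 /\
  forall i' j' s, 0 <= s <= 1 -> q i' j' s <= q i j t.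
Proof.
have tf : forall pr : 'I_K * 'I_K, {t | 0 <= t <= 1 &
    forall s, 0 <= s <= 1 -> q pr.1 pr.2 s <= q pr.1 pr.2 t}.
  by move=> pr; apply: cid2; exact: q_max.
pose F pr := q pr.1 pr.2 (sval (tf pr)).
have [pr _ hpr] := @arg_maxP _ _ _ (i0, i0) xpredT F erefl.
exists pr.1, pr.2, (sval (tf pr)); split; first by case: (tf pr).
move=> i' j' s hs.
apply: le_trans (hpr (i', j') erefl).
rewrite /F /=; case: (tf (i', j')) => /= t _ h; exact: h.
Qed.
End Alg.
Arguments q {R K} a b c i j t.

Section S.
Context (R : realType) (d : measure_display) (T : measurableType d)
  (K : nat) (P : 'I_K -> probability T R) (X Y : T -> R).
Hypothesis mX : measurable_fun setT X.
Hypothesis mY : measurable_fun setT Y.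
Hypothesis iX2 : forall i, (P i).-integrable setT (fun x => (X x ^+ 2)%:E).
Hypothesis iY2 : forall i, (P i).-integrable setT (fun x => (Y x ^+ 2)%:E).

Lemma int_sq (Z : T -> R) i : measurable_fun setT Z ->
  (P i).-integrable setT (fun x => (Z x ^+ 2)%:E) ->
  (P i).-integrable setT (EFin \o Z).
Proof.
move=> mZ iZ.
apply: (le_integrable measurableT (g := fun x => (Z x ^+ 2)%:E + (1:R)%:E)%E).
- exact/measurable_realfun.measurable_EFinP.
- move=> x _ /=. idtac.
  have h1 : 0 <= Z x ^+ 2 + 1 by rewrite addr_ge0 // sqr_ge0.
  rewrite lee_fin (ger0_norm h1).
  have : `|Z x| ^+ 2 = Z x ^+ 2 by rewrite real_normK // num_real.
  have := normr_ge0 (Z x). nra.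
- apply: (integrableD _ iZ) => //.
  exact: (finite_measure_integrable_cst (P i) 1 measurableT).
Qed.

Lemma iX i : (P i).-integrable setT (EFin \o X). Proof. exact: int_sq. Qed.
Lemma iY i : (P i).-integrable setT (EFin \o Y). Proof. exact: int_sq. Qed.
Lemma iXY i : (P i).-integrable setT (EFin \o (fun x => X x * Y x)).
Proof.
apply: (le_integrable measurableT (g := fun x => (X x ^+ 2)%:E + (Y x ^+ 2)%:E)%E).
- exact/measurable_realfun.measurable_EFinP/measurable_realfun.measurable_funM.
- move=> x _ /=. idtac.
  have h1 : 0 <= X x ^+ 2 + Y x ^+ 2 by rewrite addr_ge0 // sqr_ge0.
  rewrite lee_fin (ger0_norm h1) normrM.
  have : `|X x| ^+ 2 = X x ^+ 2 by rewrite real_normK // num_real.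
  have : `|Y x| ^+ 2 = Y x ^+ 2 by rewrite real_normK // num_real.
  have := normr_ge0 (X x). have := normr_ge0 (Y x). nra.
- exact: (integrableD _ (iX2 i) (iY2 i)).
Qed.

Let intR i (f : T -> R) := (P i).-integrable setT (EFin \o f).

Lemma iDr i f g : intR i f -> intR i g -> intR i (fun x => f x + g x).
Proof.
move=> hf hg; apply: eq_integrable (integrableD measurableT hf hg) => //.
Qed.

Lemma iZr i k f : intR i f -> intR i (fun x => k * f x).
Proof.
move=> hf; apply: eq_integrable (integrableZl measurableT k hf) => //.
Qed.

Lemma iC i k : intR i (fun _ => k).
Proof. exact: (finite_measure_integrable_cst (P i) k measurableT). Qed.

Lemma EiR i f : Ei P i f = \int[P i]_(x in setT) f x.
Proof. by []. Qed.

Lemma Ei_cov i m1 m2 :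
  Ei P i (fun x => (X x - m1) * (Y x - m2)) =
  Ei P i (fun x => X x * Y x) - m2 * Ei P i X - m1 * Ei P i Y + m1 * m2.
Proof.
rewrite !EiR.
rewrite (@eq_Rintegral _ _ _ _ _ (fun x => X x * Y x + (- m2) * X x + (- m1) * Y x + m1 * m2)); last first.
  by move=> x _; ring.
have hXY := iXY i. have hX := iX i. have hY := iY i.
have h1 : intR i (fun x => X x * Y x + - m2 * X x) by apply: iDr => //; exact: iZr.
have h2 : intR i (fun x => X x * Y x + - m2 * X x + - m1 * Y x) by apply: iDr => //; exact: iZr.
rewrite (RintegralD _ h2) //; last exact: iC.
rewrite (RintegralD _ h1) //; last exact: iZr.
rewrite (RintegralD _ hXY) //; last exact: iZr.
have hc : \int[P i]_(x in setT) m2 = m2.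
  rewrite Rintegral_cst // (_ : fine _ = 1) ?mulr1 //; exact: (f_equal fine (probability_setT (P i))).
rewrite !RintegralZl //. rewrite [X in _ + m1 * X](_ : _ = m2); last exact: hc.
ring. exact: iC.
Qed.

Lemma Ei_neg i : Ei P i (fun x => - X x) = - Ei P i X.
Proof.
rewrite !EiR (@eq_Rintegral _ _ _ _ _ (fun x => (-1) * X x)); last by move=> x _; ring.
by rewrite RintegralZl // ?mulN1r //; exact: iX.
Qed.
Lemma Ei_negY i : Ei P i (fun x => - Y x) = - Ei P i Y.
Proof.
rewrite !EiR (@eq_Rintegral _ _ _ _ _ (fun x => (-1) * Y x)); last by move=> x _; ring.
by rewrite RintegralZl // ?mulN1r //; exact: iY.
Qed.

Hypothesis hK : (0 < K)%N.
Let i0 : 'I_K := Ordinal hK.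
Let a i := Ei P i X.
Let b i := Ei P i Y.
Let c i := Ei P i (fun x => X x * Y x).

Lemma Ehat_ub Z i : Ei P i Z <= Ehat P Z.
Proof.
apply: ub_le_sup; last by exists i.
exists (\sum_j `|Ei P j Z|) => y [j _ <-].
rewrite (bigD1 j) //=; apply: le_trans (ler_norm _) _.
by rewrite lerDl sumr_ge0.
Qed.

Lemma Ehat_le Z t : (forall i, Ei P i Z <= t) -> Ehat P Z <= t.
Proof.
move=> h; apply: ge_sup; first by exists (Ei P i0 Z), i0.
by move=> y [j _ <-].
Qed.

Lemma boundsX i : mu_lo P X <= a i <= mu_up P X.
Proof.
apply/andP; split; last exact: Ehat_ub.
by rewrite /mu_lo lerNl -Ei_neg; exact: Ehat_ub.
Qed.

Lemma boundsY i : mu_lo P Y <= b i <= mu_up P Y.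
Proof.
apply/andP; split; last exact: Ehat_ub.
by rewrite /mu_lo lerNl -Ei_negY; exact: Ehat_ub.
Qed.

Lemma fcov_ge m1 m2 i :
  c i - m2 * a i - m1 * b i + m1 * m2 <= Ehat P (fun x => (X x - m1) * (Y x - m2)).
Proof. by rewrite /a /b /c -Ei_cov; exact: Ehat_ub. Qed.

Lemma inner_lb m2 :
  has_lbound [set Ehat P (fun x => (X x - m1) * (Y x - m2))
                | m1 in `[mu_lo P X, mu_up P X]].
Proof.
pose M := `|mu_lo P X| + `|mu_up P X|.
pose s := m2 - b i0.
exists (c i0 - m2 * a i0 - M * `|s|) => y [m1 hm1 <-].
apply: le_trans (fcov_ge m1 m2 i0).
move: hm1; rewrite /= in_itv /= => /andP[h1 h2].
have hbe := ler_norm (mu_up P X).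
have hnal : - `|mu_lo P X| <= mu_lo P X by rewrite lerNl -normrN ler_norm.
have hM1 : m1 <= M by rewrite /M; have := normr_ge0 (mu_lo P X); lra.
have hM2 : - M <= m1 by rewrite /M; have := normr_ge0 (mu_up P X); lra.
have : - (M * `|s|) <= m1 * s.
  have [hs|hs] := lerP 0 s.
    rewrite ger0_norm //; nra.
  rewrite ltr0_norm //; nra.
rewrite /s; lra.
Qed.

Lemma UB_gen V : (forall i j s, 0 <= s <= 1 -> q a b c i j s <= V) ->
  forall m2, inf [set Ehat P (fun x => (X x - m1) * (Y x - m2))
                | m1 in `[mu_lo P X, mu_up P X]] <= V.
Proof.
move=> hV m2.
have [m1 [hm1 hall]] := @helly R K a b c _ _ m2 V i0 boundsX hV.
apply: le_trans (_ : Ehat P (fun x => (X x - m1) * (Y x - m2)) <= V).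
  apply: ge_inf; first exact: inner_lb.
  by exists m1 => //=; rewrite in_itv.
apply: Ehat_le => i; rewrite Ei_cov; exact: hall.
Qed.

Lemma outer_ub V : (forall i j s, 0 <= s <= 1 -> q a b c i j s <= V) ->
  ubound [set inf [set Ehat P (fun x => (X x - m1) * (Y x - m2))
                | m1 in `[mu_lo P X, mu_up P X]]
       | m2 in `[mu_lo P Y, mu_up P Y]] V.
Proof. by move=> hV y [m2 _ <-]; exact: UB_gen. Qed.

Lemma cov_le V : (forall i j s, 0 <= s <= 1 -> q a b c i j s <= V) ->
  upper_cov P X Y <= V.
Proof.
move=> hV; apply: ge_sup; last exact: outer_ub.
have := boundsY i0; case/andP => h1 h2.
eexists; exists (b i0) => //=; by rewrite in_itv /= h1 h2.
Qed.

Lemma cov_ge V : (forall i j s, 0 <= s <= 1 -> q a b c i j s <= V) ->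
  forall lam : 'cV[R]_K, simplex K lam ->
  \sum_k lam k 0 * c k - (\sum_k lam k 0 * a k) * (\sum_k lam k 0 * b k)
    <= upper_cov P X Y.
Proof.
move=> hV lam [hpos hsum].
pose m2 := \sum_k lam k 0 * b k.
have hm2 : m2 \in `[mu_lo P Y, mu_up P Y].
  rewrite in_itv /=; apply/andP; split.
    rewrite -[mu_lo P Y]mul1r -hsum mulr_suml /m2; apply: ler_sum => k _.
    apply: ler_wpM2l => //; by case/andP: (boundsY k).
  rewrite -[mu_up P Y]mul1r -hsum mulr_suml /m2; apply: ler_sum => k _.
  apply: ler_wpM2l => //; by case/andP: (boundsY k).
apply: le_trans (_ : inf [set Ehat P (fun x => (X x - m1) * (Y x - m2))
                | m1 in `[mu_lo P X, mu_up P X]] <= _); last first.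
  apply: ub_le_sup; last by exists m2.
  by exists V; exact: outer_ub.
apply: lb_le_inf.
  have := boundsX i0; case/andP => h1 h2.
  by eexists; exists (a i0) => //=; rewrite in_itv /= h1 h2.
move=> y [m1 _ <-].
have e : \sum_k lam k 0 * (c k - m2 * a k - m1 * b k + m1 * m2) =
  \sum_k lam k 0 * c k - m2 * (\sum_k lam k 0 * a k)
    - m1 * m2 + m1 * m2.
  rewrite (eq_bigr (fun k => lam k 0 * c k + (- m2) * (lam k 0 * a k)
      + (- m1) * (lam k 0 * b k) + (m1 * m2) * lam k 0)); last by move=> k _; ring.
  rewrite !big_split /= -!mulr_sumr hsum -/m2; ring.
have -> : \sum_k lam k 0 * c k - (\sum_k lam k 0 * a k) * m2 =
  \sum_k lam k 0 * (c k - m2 * a k - m1 * b k + m1 * m2) by rewrite e; ring.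
rewrite -[X in _ <= X]mul1r -hsum mulr_suml; apply: ler_sum => k _.
apply: ler_wpM2l => //; exact: fcov_ge.
Qed.
End S.

Lemma objE (R : realType) (K : nat) (lam mu nu ka : 'cV[R]_K) :
  (lam^T *m ka) 0 0 - (lam^T *m mu *m nu^T *m lam) 0 0 =
  \sum_k lam k 0 * ka k 0 - (\sum_k lam k 0 * mu k 0) * (\sum_k lam k 0 * nu k 0).
Proof.
rewrite !mxE; congr (_ - _).
  by apply: eq_bigr => k _; rewrite mxE.
rewrite mulr_sumr; apply: eq_bigr => k _.
rewrite !mxE big_ord1 !mxE.
rewrite (eq_bigr (fun j => lam j 0 * mu j 0)); last by move=> j _; rewrite mxE.
ring.
Qed.

Lemma sum_ind (R : realType) (K : nat) (F : 'I_K -> R) i :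
  \sum_k (k == i)%:R * F k = F i.
Proof.
rewrite (bigD1 i) //= eqxx mul1r big1 ?addr0 // => k /negbTE ->.
by rewrite mul0r.
Qed.

Lemma sum_two (R : realType) (K : nat) (F : 'I_K -> R) i j t :
  \sum_k (t * (k == i)%:R + (1 - t) * (k == j)%:R) * F k =
  t * F i + (1 - t) * F j.
Proof.
rewrite (eq_bigr (fun k => t * ((k == i)%:R * F k) + (1 - t) * ((k == j)%:R * F k)));
  last by move=> k _; ring.
by rewrite big_split /= -!mulr_sumr !sum_ind.
Qed.

Theorem proposition5p1 (R : realType) (d : measure_display) (T : measurableType d)
  (K : nat) (P : 'I_K -> probability T R) (X Y : T -> R) :
  (0 < K)%N ->
  measurable_fun setT X -> measurable_fun setT Y ->
  (forall i, (P i).-integrable setT (fun x => (X x ^+ 2)%:E)) ->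
  (forall i, (P i).-integrable setT (fun x => (Y x ^+ 2)%:E)) ->
  let mu := Evec P X in
  let nu := Evec P Y in
  let kappa := Evec P (fun x => X x * Y x) in
  let obj := fun lam : 'cV[R]_K =>
    (lam^T *m kappa) 0 0 - (lam^T *m mu *m nu^T *m lam) 0 0 in
  exists2 lam0, simplex K lam0 &
    upper_cov P X Y = obj lam0 /\ (forall lam, simplex K lam -> obj lam <= obj lam0).
Proof.
move=> hK mX mY iX2 iY2 mu nu kappa obj.
pose a i := Ei P i X. pose b i := Ei P i Y. pose c i := Ei P i (fun x => X x * Y x).
have [i [j [t [ht hbest]]]] := @best_pair R K a b c (Ordinal hK).
pose lam0 : 'cV[R]_K := \col_k (t * (k == i)%:R + (1 - t) * (k == j)%:R).
have objE' : forall lam, obj lam =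
    \sum_k lam k 0 * c k - (\sum_k lam k 0 * a k) * (\sum_k lam k 0 * b k).
  move=> lam; rewrite /obj objE.
  congr (_ - _ * _); apply: eq_bigr => k _; by rewrite /mu /nu /kappa /Evec mxE.
have sum0 : forall F : 'I_K -> R, \sum_k lam0 k 0 * F k = t * F i + (1 - t) * F j.
  move=> F; rewrite -sum_two; apply: eq_bigr => k _; by rewrite mxE.
have o0 : obj lam0 = q a b c i j t by rewrite objE' !sum0.
have s0 : simplex K lam0.
  case/andP: ht => h0 h1; split.
    move=> k; rewrite mxE; apply: addr_ge0; apply: mulr_ge0 => //; try lra.
  have := sum0 (fun _ => 1); rewrite (eq_bigr (fun k => lam0 k 0)).
    by move=> ->; ring.
  by move=> k _; rewrite mulr1.
have hV : forall i' j' s, 0 <= s <= 1 -> q a b c i' j' s <= obj lam0.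
  by move=> i' j' s hs; rewrite o0; exact: hbest.
have UB : upper_cov P X Y <= obj lam0 by exact: (@cov_le R d T K P X Y mX mY iX2 iY2 hK _ hV).
have LB : forall lam, simplex K lam -> obj lam <= upper_cov P X Y.
  by move=> lam hl; rewrite objE'; exact: (@cov_ge R d T K P X Y mX mY iX2 iY2 hK _ hV).
exists lam0 => //; split.
  by apply/le_anti; rewrite UB LB.
by move=> lam hl; apply: le_trans (LB _ hl) UB.
Qed.
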